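(* Let $1\le k\le m$ and let $\phi_{m,k}$ be the automorphism of the free group $F_{m+k}=F(A_1,\dots,A_m,B_1,\dots,B_k)$ described below. Then $\operatorname{gr}_{\phi_{m,k}}(n)\preceq n^k$ and $\operatorname{gr}_{(\phi_{m,k})^{-1}}(n)\preceq n^k$.
   Context: $\phi_{m,k}(A_i)=A_1\cdots A_{i-1}A_iA_{i-1}^{-1}\cdots A_1^{-1}$ for $1\le i\le m$, and $\phi_{m,k}(B_j)=A_1\cdots A_m(B_1\cdots B_j)A_{j-1}^{-1}\cdots A_1^{-1}$ for $1\le j\le k$. $\operatorname{gr}_\psi(n)=\max_{x}\|\psi^n(x)\|$ over the free basis, $\|\cdot\|$ being word length. $f\preceq g$ means $f(n)\le Ag(n)+B$ for some $A>0,B\ge0$ and all $n$. *)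

(* Defs.v *)
From mathcomp Require Import all_boot.
Set Implicit Arguments. Unset Strict Implicit. Unset Printing Implicit Defensive.

(* a letter (g, b) is x_g if b = false and x_g^{-1} if b = true *)
Definition letter := (nat * bool)%type.
Definition word := seq letter.

Definition inv_letter (x : letter) : letter := (x.1, ~~ x.2).
Definition inv_word (w : word) : word := rev (map inv_letter w).

Definition cons_red (x : letter) (acc : word) : word :=
  if acc is y :: t then (if y == inv_letter x then t else x :: acc) else [:: x].
Definition reduce (w : word) : word := foldr cons_red [::] w.

Definition endo := nat -> word.
Definition apply_endo (f : endo) (w : word) : word :=
  reduce (flatten (map (fun x : letter => if x.2 then inv_word (f x.1) else f x.1) w)).

Definition gen (g : nat) : word := [:: (g, false)].

Definition gr (f : endo) (r : nat) (n : nat) : nat :=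
  \max_(i < r) size (iter n (apply_endo f) (gen i)).

Definition growth_le_poly (G : nat -> nat) (k : nat) : Prop :=
  exists A B : nat, forall n, G n <= A * n ^ k + B.

Definition is_inverse_endo (f psi : endo) : Prop :=
  forall g, apply_endo psi (apply_endo f (gen g)) = gen g /\
            apply_endo f (apply_endo psi (gen g)) = gen g.

(* In F(A_1..A_m, B_1..B_k): A_i = x_{i-1}, B_j = x_{m+j-1}. *)
Definition Aseq (i : nat) : word := flatten [seq gen t | t <- iota 0 i].
Definition Bseq (m j : nat) : word := flatten [seq gen (m + t) | t <- iota 0 j].

(* phi_{m,k}: A_i |-> A_1..A_{i-1} A_i A_{i-1}^{-1}..A_1^{-1},
   B_j |-> A_1..A_m (B_1..B_j) A_{j-1}^{-1}..A_1^{-1};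
   generators of index >= m+k (outside F_{m+k}) are fixed. *)
Definition phi (m k : nat) : endo := fun g =>
  if g < m then Aseq g ++ gen g ++ inv_word (Aseq g)
  else if g < m + k then Aseq m ++ Bseq m (g - m).+1 ++ inv_word (Aseq (g - m))
  else gen g.

(* Main.v *)
Require Import Defs.
From mathcomp Require Import all_boot.
From mathcomp Require Import zify.
From Stdlib Require Import Setoid Morphisms.
Set Implicit Arguments. Unset Strict Implicit. Unset Printing Implicit Defensive.

Lemma inv_letterK : involutive inv_letter.
Proof. by case=> g b; rewrite /inv_letter /= negbK. Qed.

Lemma inv_wordK : involutive inv_word.
Proof. by move=> w; rewrite /inv_word map_rev revK (mapK inv_letterK). Qed.

Lemma inv_word_cat u v : inv_word (u ++ v) = inv_word v ++ inv_word u.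
Proof. by rewrite /inv_word map_cat rev_cat. Qed.

Lemma inv_word_cons x u : inv_word (x :: u) = inv_word u ++ [:: inv_letter x].
Proof. by rewrite /inv_word /= rev_cons cats1. Qed.

Lemma size_inv_word u : size (inv_word u) = size u.
Proof. by rewrite /inv_word size_rev size_map. Qed.

Lemma inv_word_nil : inv_word [::] = [::].
Proof. by []. Qed.

Fixpoint reduced (w : word) : bool :=
  if w is x :: t then (if t is y :: _ then y != inv_letter x else true) && reduced t
  else true.

Lemma cons_red_reduced x acc : reduced acc -> reduced (cons_red x acc).
Proof.
case: acc => [|y t] //= /andP[H1 H2].
case: eqP => [_|/eqP ne] //=.
by rewrite ne H1 H2.
Qed.

Lemma foldr_reduced r u : reduced r -> reduced (foldr cons_red r u).
Proof. by move=> Hr; elim: u => //= x u IH; apply: cons_red_reduced. Qed.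

Lemma reduce_reduced w : reduced (reduce w).
Proof. exact: foldr_reduced. Qed.

Lemma cons_redK x acc : reduced acc -> cons_red x (cons_red (inv_letter x) acc) = acc.
Proof.
case: acc => [|y t] /=; first by rewrite eqxx.
rewrite inv_letterK.
case: (eqVneq y x) => [->|ne] /andP[H1 H2] /=.
  case: t H1 H2 => [|z t] //= H1 _.
  by rewrite (negbTE H1).
by rewrite eqxx.
Qed.

Lemma foldr_red r u : reduced r -> foldr cons_red r u = foldr cons_red r (reduce u).
Proof.
move=> Hr; elim: u => //= x u IH.
rewrite IH; rewrite /reduce.
case E: (foldr cons_red [::] u) => [|y t] //=.
case: eqP => [->|] //=.
by rewrite cons_redK //; apply: foldr_reduced.
Qed.

Lemma reduceK w : reduce (reduce w) = reduce w.
Proof. by rewrite /reduce -foldr_red. Qed.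

Lemma reduce_cat u v : reduce (u ++ v) = foldr cons_red (reduce v) u.
Proof. by rewrite /reduce foldr_cat. Qed.

Lemma cancel_foldr r u : reduced r -> foldr cons_red r (u ++ inv_word u) = r.
Proof.
elim: u r => //= x u IH r Hr.
rewrite inv_word_cons catA foldr_cat IH /=.
  by rewrite cons_redK.
exact: cons_red_reduced.
Qed.

Lemma size_cons_red x acc : size (cons_red x acc) <= (size acc).+1.
Proof. case: acc => [|y t] //=; case: eqP => _ //=; exact: leqW. Qed.

Lemma size_reduce w : size (reduce w) <= size w.
Proof.
elim: w => //= x w IH.
apply: leq_trans (size_cons_red _ _) _; by [].
Qed.

Definition eqw (u v : word) := reduce u = reduce v.
Notation "u =w v" := (eqw u v) (at level 70).

#[export] Instance eqw_equiv : Equivalence eqw.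
Proof. split; rewrite /eqw => //. by move=> x y z -> ->. Qed.

Lemma eqw_cat_red u v : reduce (u ++ v) = reduce (reduce u ++ reduce v).
Proof.
rewrite !reduce_cat reduceK foldr_red; last exact: reduce_reduced.
by rewrite [RHS]foldr_red ?reduceK //; exact: reduce_reduced.
Qed.

Lemma eqw_cat u u' v v' : eqw u u' -> eqw v v' -> eqw (u ++ v) (u' ++ v').
Proof. move=> Hu Hv. rewrite /eqw in Hu Hv *. by rewrite eqw_cat_red Hu Hv -eqw_cat_red. Qed.

#[export] Instance cat_eqw : Proper (eqw ==> eqw ==> eqw) (@cat letter).
Proof. move=> u u' Hu v v' Hv. exact: eqw_cat. Qed.

#[export] Instance cons_eqw : Proper (eq ==> eqw ==> eqw) (@cons letter).
Proof. move=> x _ <- v v' Hv. exact: (@eqw_cat [:: x] [:: x] v v' (erefl _) Hv). Qed.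

Lemma reduce_eqw u : reduce u =w u.
Proof. exact: reduceK. Qed.

Lemma cancelR u : u ++ inv_word u =w [::].
Proof. by rewrite /eqw /reduce cancel_foldr. Qed.

Lemma cancelL u : inv_word u ++ u =w [::].
Proof. by rewrite -{2}(inv_wordK u) cancelR. Qed.

Lemma cancelR' u c : u ++ inv_word u ++ c =w c.
Proof. by rewrite catA cancelR. Qed.

Lemma cancelL' u c : inv_word u ++ u ++ c =w c.
Proof. by rewrite catA cancelL. Qed.

Lemma cancel_letter x c : x :: inv_letter x :: c =w c.
Proof. by rewrite /eqw /= cons_redK // reduce_reduced. Qed.

Lemma cancel_letter' x c : inv_letter x :: x :: c =w c.
Proof. by rewrite -{2}(inv_letterK x) cancel_letter. Qed.

Lemma inv_reduce u : inv_word (reduce u) =w inv_word u.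
Proof.
transitivity (inv_word (reduce u) ++ (u ++ inv_word u)).
  by rewrite cancelR cats0.
have H : inv_word (reduce u) ++ u =w [::].
  rewrite -(cancelL (reduce u)).
  exact: (eqw_cat (reflexivity _) (symmetry (reduce_eqw u))).
by rewrite catA H.
Qed.

#[export] Instance inv_eqw : Proper (eqw ==> eqw) inv_word.
Proof. move=> u v H. rewrite -inv_reduce. rewrite /eqw in H *. rewrite H. exact: inv_reduce. Qed.

Definition img (f : endo) (x : letter) : word := if x.2 then inv_word (f x.1) else f x.1.
Definition sub (f : endo) (w : word) : word := flatten (map (img f) w).

Lemma applyE f w : apply_endo f w = reduce (sub f w).
Proof. by []. Qed.

Lemma sub_cat f u v : sub f (u ++ v) = sub f u ++ sub f v.
Proof. by rewrite /sub map_cat flatten_cat. Qed.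

Lemma sub_cons f x u : sub f (x :: u) = img f x ++ sub f u.
Proof. by []. Qed.

Lemma img_inv f x : img f (inv_letter x) = inv_word (img f x).
Proof. by case: x => g [] //=; rewrite /img /= inv_wordK. Qed.

Lemma sub_inv f u : sub f (inv_word u) = inv_word (sub f u).
Proof.
elim: u => //= x u IH.
by rewrite inv_word_cons sub_cat IH /sub /= cats0 img_inv inv_word_cat.
Qed.

Lemma sub_gen f g : sub f (gen g) = f g ++ [::].
Proof. by []. Qed.

Lemma sub_nil f : sub f [::] = [::].
Proof. by []. Qed.

Lemma sub_reduce f w : sub f (reduce w) =w sub f w.
Proof.
elim: w => //= x w IH.
rewrite sub_cons -IH.
case E: (reduce w) => [|y t] //=.
case: eqP => [->|_] //.
rewrite sub_cons img_inv.
by rewrite cancelR'.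
Qed.

#[export] Instance sub_eqw f : Proper (eqw ==> eqw) (sub f).
Proof.
move=> u v H; rewrite -(sub_reduce f u) -(sub_reduce f v).
by move: H; rewrite /eqw => ->.
Qed.

Lemma apply_eqw f w : apply_endo f w =w sub f w.
Proof. exact: reduce_eqw. Qed.

Definition It (f : endo) n w := iter n (apply_endo f) w.

Lemma ItS f n w : It f n.+1 w = apply_endo f (It f n w).
Proof. by []. Qed.

Lemma ItSr f n w : It f n.+1 w = It f n (apply_endo f w).
Proof. exact: iterSr. Qed.

#[export] Instance It_eqw f n : Proper (eqw ==> eqw) (It f n).
Proof.
elim: n => [|n IH] u v H //.
by rewrite !ItS !apply_eqw (IH u v H).
Qed.

Lemma It_cat f n u v : It f n (u ++ v) =w It f n u ++ It f n v.
Proof.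
elim: n => [|n IH] //.
by rewrite !ItS !apply_eqw IH sub_cat.
Qed.

Lemma It_inv f n u : It f n (inv_word u) =w inv_word (It f n u).
Proof.
elim: n => [|n IH] //.
by rewrite !ItS !apply_eqw IH sub_inv.
Qed.

Definition Lsz f n w := size (reduce (It f n w)).

Lemma Lsz_eqw f n u v : u =w v -> Lsz f n u = Lsz f n v.
Proof. move=> H. rewrite /Lsz. have := It_eqw f n H. by rewrite /eqw => ->. Qed.

Lemma Lsz_cat f n u v : Lsz f n (u ++ v) <= Lsz f n u + Lsz f n v.
Proof.
have := It_cat f n u v; rewrite /Lsz /eqw => ->.
rewrite eqw_cat_red; apply: leq_trans (size_reduce _) _.
by rewrite size_cat.
Qed.

Lemma Lsz_inv f n u : Lsz f n (inv_word u) <= Lsz f n u.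
Proof.
have := It_inv f n u; rewrite /Lsz /eqw => ->.
have := inv_reduce (It f n u); rewrite /eqw => <-.
by apply: leq_trans (size_reduce _) _; rewrite size_inv_word.
Qed.

Lemma Lsz_sub f n w : Lsz f n (sub f w) = Lsz f n.+1 w.
Proof. by rewrite /Lsz ItSr; apply: Lsz_eqw; rewrite apply_eqw. Qed.

Lemma Lsz_le f n w v : It f n w =w v -> Lsz f n w <= size v.
Proof. by rewrite /Lsz /eqw => ->; apply: size_reduce. Qed.

Lemma It_gen_reduced f n g : reduce (It f n (gen g)) = It f n (gen g).
Proof. by case: n => [|n] //; rewrite ItS applyE reduceK. Qed.

Lemma gr_le f r n c : (forall i, i < r -> Lsz f n (gen i) <= c) -> gr f r n <= c.
Proof.
move=> H; rewrite /gr; apply/bigmax_leqP => i _.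
by have := H i (ltn_ord i); rewrite /Lsz It_gen_reduced.
Qed.

Fixpoint Ew (j n : nat) (b : bool) : word :=
  if j is j'.+1 then Ew j' n b ++ nseq n (j', b) else [::].

Lemma Ew0 j b : Ew j 0 b = [::].
Proof. by elim: j => //= j ->. Qed.

Lemma size_Ew j n b : size (Ew j n b) = j * n.
Proof. by elim: j => //= j IH; rewrite size_cat IH size_nseq mulSn addnC. Qed.

Lemma Aseq_S j : Aseq j.+1 = Aseq j ++ gen j.
Proof. by rewrite /Aseq -addn1 iotaD map_cat flatten_cat /= ?cats0 ?add0n. Qed.

Lemma Bseq_S m s : Defs.Bseq m s.+1 = Defs.Bseq m s ++ gen (m + s).
Proof. by rewrite /Defs.Bseq -addn1 iotaD map_cat flatten_cat /= ?cats0 ?add0n. Qed.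

Lemma nseqSr n (x : letter) : nseq n.+1 x = nseq n x ++ [:: x].
Proof. by elim: n => //= n <-. Qed.

Lemma sub_nseq f n x : sub f (nseq n x) = flatten (nseq n (img f x)).
Proof. by elim: n => //= n IH; rewrite sub_cons IH. Qed.

Lemma flatten_nseq1 n (x : letter) : flatten (nseq n [:: x]) = nseq n x.
Proof. by elim: n => //= n ->. Qed.

Lemma conj_pow p x n : flatten (nseq n (p ++ x ++ inv_word p)) =w p ++ flatten (nseq n x) ++ inv_word p.
Proof.
elim: n => [|n IH] /=; first by rewrite cancelR.
by rewrite IH -!catA cancelL'.
Qed.

Lemma cancel_gen g c : (g, false) :: (g, true) :: c =w c.
Proof. exact: (cancel_letter (g, false)). Qed.

Lemma cancel_gen' g c : (g, true) :: (g, false) :: c =w c.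
Proof. exact: (cancel_letter (g, true)). Qed.

Lemma inv_gen g : inv_word (gen g) = [:: (g, true)].
Proof. by []. Qed.

Lemma phiA m k i : i < m -> phi m k i = Aseq i ++ gen i ++ inv_word (Aseq i).
Proof. by rewrite /phi => ->. Qed.

Lemma phiB m k j : j < k -> phi m k (m + j) = Aseq m ++ Defs.Bseq m j.+1 ++ inv_word (Aseq j).
Proof.
move=> H; rewrite /phi ltnNge leq_addr /= ltn_add2l H.
by rewrite addKn.
Qed.

Lemma phiB1 m k : 0 < k -> phi m k m = Aseq m ++ gen m.
Proof. move=> H; have := phiB m H; rewrite addn0 => ->. by rewrite /Defs.Bseq /= addn0. Qed.

Lemma phiBs m k j : j.+1 < k ->
  phi m k (m + j.+1) =w phi m k (m + j) ++ Aseq j ++ gen (m + j.+1) ++ inv_word (Aseq j.+1).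
Proof.
move=> H; rewrite !phiB //; last exact: ltnW.
rewrite Bseq_S Aseq_S inv_word_cat -!catA.
by rewrite cancelL'.
Qed.

Lemma EwS j n b : Ew j.+1 n b = Ew j n b ++ nseq n (j, b).
Proof. by []. Qed.

Lemma img_f f g : img f (g, false) = f g.
Proof. by []. Qed.

Lemma img_t f g : img f (g, true) = inv_word (f g).
Proof. by []. Qed.

Lemma ephi_f m k j n : j <= m ->
  sub (phi m k) (Ew j n false) =w Ew j n.+1 false ++ inv_word (Aseq j).
Proof.
elim: j => [|j IH] Hj; first by [].
rewrite EwS sub_cat IH ?(ltnW Hj) // sub_nseq img_f phiA // conj_pow flatten_nseq1.
rewrite Aseq_S inv_word_cat EwS nseqSr inv_gen -!catA cancelL' /=.
by rewrite cancel_gen.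
Qed.

Lemma ephi_t m k j n : j <= m ->
  sub (phi m k) (Ew j n.+1 true) =w Ew j n true ++ inv_word (Aseq j).
Proof.
elim: j => [|j IH] Hj; first by [].
rewrite EwS sub_cat IH ?(ltnW Hj) // sub_nseq img_t phiA //.
rewrite (inv_word_cat (Aseq j)) (inv_word_cat (gen j)) inv_wordK inv_gen -!catA conj_pow flatten_nseq1.
rewrite Aseq_S inv_word_cat cancelL' nseqSr inv_gen -!catA. by [].
Qed.

Lemma ItA m k i n : i < m ->
  It (phi m k) n (gen i) =w Ew i n false ++ gen i ++ inv_word (Ew i n false).
Proof.
move=> Hi; elim: n => [|n IH]; first by rewrite Ew0.
rewrite ItS apply_eqw IH (sub_cat _ (Ew i n false)) (sub_cat _ (gen i)) sub_inv sub_gen phiA // (@ephi_f m k i n (ltnW Hi)).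
by rewrite (inv_word_cat (Ew i n.+1 false)) inv_wordK cats0 -!catA cancelL' cancelL'.
Qed.

Lemma ItB1 m k n : 0 < k ->
  It (phi m k) n (gen m) =w Ew m n false ++ gen m.
Proof.
move=> Hk; elim: n => [|n IH]; first by rewrite Ew0.
rewrite ItS apply_eqw IH sub_cat sub_gen (phiB1 m Hk) (@ephi_f m k m n (leqnn m)).
by rewrite cats0 -!catA cancelL'.
Qed.

Lemma psi_phi_gen m k (psi : endo)
  (H : forall g, apply_endo psi (apply_endo (phi m k) (gen g)) = gen g) g :
  sub psi (phi m k g) =w gen g.
Proof.
have := H g; rewrite !applyE.
have := sub_reduce psi (sub (phi m k) (gen g)); rewrite /eqw => ->.
by rewrite sub_gen cats0 => ->.
Qed.

Lemma psi_phi m k (psi : endo)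
  (H : forall g, apply_endo psi (apply_endo (phi m k) (gen g)) = gen g) w :
  sub psi (sub (phi m k) w) =w w.
Proof.
elim: w => // x u IH.
rewrite sub_cons sub_cat IH.
case: x => g [].
  by rewrite img_t sub_inv (psi_phi_gen H g) inv_gen.
by rewrite img_f (psi_phi_gen H g).
Qed.

Lemma sub_phi_Xt m k i n : i < m ->
  sub (phi m k) (Ew i n.+1 true ++ gen i ++ inv_word (Ew i n.+1 true)) =w
  Ew i n true ++ gen i ++ inv_word (Ew i n true).
Proof.
move=> Hi.
rewrite (sub_cat _ (Ew i n.+1 true)) (sub_cat _ (gen i)) sub_inv sub_gen phiA // (@ephi_t m k i n (ltnW Hi)).
by rewrite (inv_word_cat (Ew i n true)) inv_wordK cats0 -!catA cancelL' cancelL'.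
Qed.

Lemma ItAt m k (psi : endo)
  (H : forall g, apply_endo psi (apply_endo (phi m k) (gen g)) = gen g) i n : i < m ->
  It psi n (gen i) =w Ew i n true ++ gen i ++ inv_word (Ew i n true).
Proof.
move=> Hi; elim: n => [|n IH]; first by rewrite Ew0.
by rewrite ItS apply_eqw IH -(@sub_phi_Xt m k i n Hi) (psi_phi H).
Qed.

Lemma sub_phi_B1t m k n : 0 < k ->
  sub (phi m k) (Ew m n.+1 true ++ gen m) =w Ew m n true ++ gen m.
Proof.
move=> Hk.
rewrite sub_cat sub_gen (phiB1 m Hk) (@ephi_t m k m n (leqnn m)).
by rewrite cats0 -!catA cancelL'.
Qed.

Lemma ItB1t m k (psi : endo)
  (H : forall g, apply_endo psi (apply_endo (phi m k) (gen g)) = gen g) n : 0 < k ->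
  It psi n (gen m) =w Ew m n true ++ gen m.
Proof.
move=> Hk; elim: n => [|n IH]; first by rewrite Ew0.
by rewrite ItS apply_eqw IH -(@sub_phi_B1t m k n Hk) (psi_phi H).
Qed.

Lemma psiBs m k (psi : endo)
  (H : forall g, apply_endo psi (apply_endo (phi m k) (gen g)) = gen g) j : j.+1 < k ->
  sub psi (gen (m + j.+1)) =w
  inv_word (gen (m + j) ++ sub psi (Aseq j)) ++ gen (m + j.+1) ++ sub psi (Aseq j.+1).
Proof.
move=> Hj.
set Y := sub psi (gen (m + j.+1)).
have H1 : gen (m + j.+1) =w gen (m + j) ++ sub psi (Aseq j) ++ Y ++ inv_word (sub psi (Aseq j.+1)).
  transitivity (sub psi (phi m k (m + j.+1))); first by rewrite (psi_phi_gen H).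
  rewrite (@phiBs m k j Hj) (sub_cat _ (phi m k (m + j))) (sub_cat _ (Aseq j)) (sub_cat _ (gen _)).
  by rewrite sub_inv (psi_phi_gen H).
symmetry.
transitivity (inv_word (gen (m + j) ++ sub psi (Aseq j)) ++
   (gen (m + j) ++ sub psi (Aseq j) ++ Y ++ inv_word (sub psi (Aseq j.+1))) ++ sub psi (Aseq j.+1)).
  exact: (eqw_cat (reflexivity _) (eqw_cat H1 (reflexivity _))).
rewrite inv_word_cat -!catA cancelL' cancelL' cancelL.
by rewrite cats0.
Qed.

Lemma It_nil f n : It f n [::] = [::].
Proof. by elim: n => // n IH; rewrite ItS IH. Qed.

Lemma Lsz_Aseq f n t c : (forall s, s < t -> Lsz f n (gen s) <= c) -> Lsz f n (Aseq t) <= t * c.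
Proof.
elim: t => [|t IH] Hs; first by rewrite /Lsz /Aseq /= It_nil.
rewrite Aseq_S; apply: leq_trans (Lsz_cat _ _ _ _) _.
rewrite mulSnr; apply: leq_add.
  by apply: IH => s Hst; apply: Hs; apply: ltnW.
exact: Hs.
Qed.

Lemma Lsz_cat4 f n a b c d :
  Lsz f n (a ++ b ++ c ++ d) <= Lsz f n a + Lsz f n b + Lsz f n c + Lsz f n d.
Proof.
apply: leq_trans (Lsz_cat _ _ _ _) _; rewrite -!addnA leq_add2l.
apply: leq_trans (Lsz_cat _ _ _ _) _; rewrite leq_add2l.
exact: Lsz_cat.
Qed.

Lemma Lsz_cat3 f n a b c :
  Lsz f n (a ++ b ++ c) <= Lsz f n a + Lsz f n b + Lsz f n c.
Proof.
apply: leq_trans (Lsz_cat _ _ _ _) _; rewrite -!addnA leq_add2l.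
exact: Lsz_cat.
Qed.

Lemma LA_phi m k n i : i < m -> Lsz (phi m k) n (gen i) <= (2*m+1) * n.+1.
Proof.
move=> Hi; apply: leq_trans (Lsz_le (@ItA m k i n Hi)) _.
rewrite !size_cat size_inv_word size_Ew /=. nia.
Qed.

Lemma LB1_phi m k n : 0 < k -> Lsz (phi m k) n (gen m) <= (2*m+1) * n.+1.
Proof.
move=> Hk; apply: leq_trans (Lsz_le (@ItB1 m k n Hk)) _.
rewrite !size_cat size_Ew /=. nia.
Qed.

Lemma LAseq_phi m k n t : t <= m -> Lsz (phi m k) n (Aseq t) <= t * ((2*m+1) * n.+1).
Proof.
move=> Ht; apply: Lsz_Aseq => s Hs; apply: LA_phi.
exact: leq_trans Hs Ht.
Qed.

Lemma Lrec_phi m k n j : j.+1 < k -> k <= m ->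
  Lsz (phi m k) n.+1 (gen (m + j.+1)) <=
  Lsz (phi m k) n (gen (m + j.+1)) + Lsz (phi m k) n.+1 (gen (m + j)) +
  Lsz (phi m k) n (gen (m + j)) + (2*m+1)*(2*m+1) * n.+2.
Proof.
move=> Hj Hkm.
have E := @phiBs m k j Hj.
rewrite -Lsz_sub sub_gen cats0 (@Lsz_eqw (phi m k) n _ _ E).
have E1 := Lsz_cat4 (phi m k) n (phi m k (m + j)) (Aseq j) (gen (m + j.+1)) (inv_word (Aseq j.+1)).
have E2 : Lsz (phi m k) n (phi m k (m + j)) = Lsz (phi m k) n.+1 (gen (m + j)).
  by rewrite -Lsz_sub sub_gen cats0.
have E3 := Lsz_inv (phi m k) n (Aseq j.+1).
have E4 := @LAseq_phi m k n j (leq_trans (ltnW (ltnW Hj)) Hkm).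
have E5 := @LAseq_phi m k n j.+1 (leq_trans (ltnW Hj) Hkm).
move: E1 E3 E4 E5; rewrite E2.
set X := Lsz _ _ (gen (m + j.+1)).
set Y := Lsz _ _ (gen (m + j)).
set Z := Lsz _ _ (gen (m + j)).
set U := Lsz _ _ (Aseq j).
set V := Lsz _ _ (Aseq j.+1).
set W := Lsz _ _ (inv_word _).
set T := Lsz _ _ (_ ++ _).
move=> E1 E3 E4 E5.
have : j.+2 <= m by apply: leq_trans Hj Hkm.
nia.
Qed.

Lemma LA_psi m k (psi : endo)
  (H : forall g, apply_endo psi (apply_endo (phi m k) (gen g)) = gen g) n i :
  i < m -> Lsz psi n (gen i) <= (2*m+1) * n.+1.
Proof.
move=> Hi; apply: leq_trans (Lsz_le (@ItAt m k psi H i n Hi)) _.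
rewrite !size_cat size_inv_word size_Ew /=. nia.
Qed.

Lemma LB1_psi m k (psi : endo)
  (H : forall g, apply_endo psi (apply_endo (phi m k) (gen g)) = gen g) n :
  0 < k -> Lsz psi n (gen m) <= (2*m+1) * n.+1.
Proof.
move=> Hk; apply: leq_trans (Lsz_le (@ItB1t m k psi H n Hk)) _.
rewrite !size_cat size_Ew /=. nia.
Qed.

Lemma LAseq_psi m k (psi : endo)
  (H : forall g, apply_endo psi (apply_endo (phi m k) (gen g)) = gen g) n t :
  t <= m -> Lsz psi n (Aseq t) <= t * ((2*m+1) * n.+1).
Proof.
move=> Ht; apply: Lsz_Aseq => s Hs; apply: (LA_psi H).
exact: leq_trans Hs Ht.
Qed.

Lemma Lrec_psi m k (psi : endo)
  (H : forall g, apply_endo psi (apply_endo (phi m k) (gen g)) = gen g) n j :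
  j.+1 < k -> k <= m ->
  Lsz psi n.+1 (gen (m + j.+1)) <=
  Lsz psi n (gen (m + j.+1)) + Lsz psi n.+1 (gen (m + j)) +
  Lsz psi n (gen (m + j)) + (2*m+1)*(2*m+1) * n.+2.
Proof.
move=> Hj Hkm.
have E := @psiBs m k psi H j Hj.
rewrite -Lsz_sub (@Lsz_eqw psi n _ _ E).
have E1 := Lsz_cat3 psi n (inv_word (gen (m + j) ++ sub psi (Aseq j))) (gen (m + j.+1)) (sub psi (Aseq j.+1)).
have E2 := Lsz_inv psi n (gen (m + j) ++ sub psi (Aseq j)).
have E3 := Lsz_cat psi n (gen (m + j)) (sub psi (Aseq j)).
have E4 := @LAseq_psi m k psi H n.+1 j (leq_trans (ltnW (ltnW Hj)) Hkm).
have E5 := @LAseq_psi m k psi H n.+1 j.+1 (leq_trans (ltnW Hj) Hkm).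
move: E1 E2 E3 E4 E5; rewrite !Lsz_sub.
set X := Lsz _ _ (gen (m + j.+1)).
set Z := Lsz _ _ (gen (m + j)).
set U := Lsz _ _ (Aseq j).
set V := Lsz _ _ (Aseq j.+1).
move=> E1 E2 E3 E4 E5.
have : j.+2 <= m by apply: leq_trans Hj Hkm.
nia.
Qed.

Lemma expn_mono a b e : a <= b -> a ^ e <= b ^ e.
Proof. by move=> H; elim: e => // e IH; rewrite !expnS leq_mul. Qed.

Lemma acc_bound (M : nat -> nat) D e :
  (forall n, M n.+1 <= M n + D * n.+1 ^ e) -> forall n, M n <= (M 0 + D) * n.+1 ^ e.+1.
Proof.
move=> HM; elim=> [|n IH]; first by rewrite exp1n muln1 leq_addr.
have h1 : n.+1 ^ e <= n.+2 ^ e by apply: expn_mono.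
have h2 := HM n.
rewrite !expnS in IH *.
move: h1 h2 IH.
set P := n.+1 ^ e. set Q := n.+2 ^ e. set A := M 0 + D.
have hD : D <= A by rewrite leq_addl.
move: hD.
nia.
Qed.

Lemma growth_gen (L : nat -> nat -> nat) m k K : 0 < k ->
  (forall i, L 0 i <= K) ->
  (forall n i, i < m -> L n i <= K * n.+1) ->
  (forall n, L n m <= K * n.+1) ->
  (forall n j, j.+1 < k -> L n.+1 (m + j.+1) <= L n (m + j.+1) + L n.+1 (m + j) + L n (m + j) + K * n.+2) ->
  exists c, forall n i, i < m + k -> L n i <= c * n.+1 ^ k.
Proof.
move=> Hk H0 HA HB HR.
suff S : forall j, j < k -> exists c, forall n i, i < m + j.+1 -> L n i <= c * n.+1 ^ j.+1.
  have Hk1 : k.-1 < k by rewrite ltn_predL.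
  have [c Hc] := S k.-1 Hk1.
  by exists c; rewrite -{1 2}(prednK Hk).
elim=> [|j IH] Hj.
  exists K => n i Hi; rewrite expn1.
  have : i <= m by rewrite addn1 ltnS in Hi.
  by rewrite leq_eqVlt => /orP[/eqP -> | /HA].
have [c Hc] := IH (ltnW Hj).
set D := c * 2 ^ j.+1 + c + 2 * K.
have HM : forall n, L n.+1 (m + j.+1) <= L n (m + j.+1) + D * n.+1 ^ j.+1.
  move=> n.
  have h0 := HR n j Hj.
  have hmj : m + j < m + j.+1 by rewrite ltn_add2l.
  have h1 := Hc n.+1 (m + j) hmj.
  have h2 := Hc n (m + j) hmj.
  have h3 : n.+2 ^ j.+1 <= 2 ^ j.+1 * n.+1 ^ j.+1.
    by rewrite -expnMn; apply: expn_mono; lia.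
  have h4 : n.+1 <= n.+1 ^ j.+1.
    by rewrite -{1}(expn1 n.+1); apply: leq_pexp2l.
  move: h0 h1 h2 h3 h4; rewrite /D.
  set P := n.+1 ^ j.+1. set Q := n.+2 ^ j.+1. set T := 2 ^ j.+1.
  move=> h0 h1 h2 h3 h4.
  have h5 : c * Q <= c * (T * P) by rewrite leq_mul2l h3 orbT.
  nia.
have Hacc := acc_bound HM.
exists (c + (K + D)) => n i Hi.
have hP : n.+1 ^ j.+1 <= n.+1 ^ j.+2 by apply: leq_pexp2l.
have : i <= m + j.+1 by rewrite addnS ltnS in Hi.
rewrite leq_eqVlt => /orP[/eqP -> | Hi'].
  have := Hacc n; have := H0 (m + j.+1).
  set X := L 0 _. set Y := L n _. set P := n.+1 ^ j.+2. nia.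
have := Hc n i Hi'.
move: hP. set P := n.+1 ^ j.+1. set Q := n.+1 ^ j.+2. nia.
Qed.

Lemma pow_bound n k : n.+1 ^ k <= 2 ^ k * n ^ k + 1.
Proof.
case: n => [|n]; first by rewrite exp1n leq_addl.
rewrite -expnMn; apply: leq_trans (leq_addr _ _).
apply: expn_mono; lia.
Qed.

Lemma growth_final f m k c :
  (forall n i, i < m + k -> Lsz f n (gen i) <= c * n.+1 ^ k) ->
  growth_le_poly (gr f (m + k)) k.
Proof.
move=> H; exists (c * 2 ^ k), c => n.
apply: leq_trans (gr_le (c := c * n.+1 ^ k) _) _; first by move=> i Hi; apply: H.
have := pow_bound n k; set P := n.+1 ^ k; set Q := n ^ k; set T := 2 ^ k. nia.
Qed.

Lemma Lsz0 f i : Lsz f 0 (gen i) = 1.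
Proof. by []. Qed.

Lemma growth_phi m k : 1 <= k -> k <= m -> growth_le_poly (gr (phi m k) (m + k)) k.
Proof.
move=> Hk Hkm.
have [c Hc] := @growth_gen (fun n i => Lsz (phi m k) n (gen i)) m k ((2*m+1)*(2*m+1)) Hk
  (fun i => ltac:(cbv beta; rewrite Lsz0; nia))
  (fun n i Hi => ltac:(cbv beta; apply: leq_trans (LA_phi k n Hi) _; nia))
  (fun n => ltac:(cbv beta; apply: leq_trans (LB1_phi m n Hk) _; nia))
  (fun n j Hj => @Lrec_phi m k n j Hj Hkm).
exact: growth_final Hc.
Qed.

Lemma growth_psi m k (psi : endo) : 1 <= k -> k <= m ->
  (forall g, apply_endo psi (apply_endo (phi m k) (gen g)) = gen g) ->
  growth_le_poly (gr psi (m + k)) k.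
Proof.
move=> Hk Hkm H.
have [c Hc] := @growth_gen (fun n i => Lsz psi n (gen i)) m k ((2*m+1)*(2*m+1)) Hk
  (fun i => ltac:(cbv beta; rewrite Lsz0; nia))
  (fun n i Hi => ltac:(cbv beta; apply: leq_trans (LA_psi H n Hi) _; nia))
  (fun n => ltac:(cbv beta; apply: leq_trans (LB1_psi H n Hk) _; nia))
  (fun n j Hj => @Lrec_psi m k psi H n j Hj Hkm).
exact: growth_final Hc.
Qed.

Definition psi0 (m k : nat) : endo := fun g =>
  if g < m then Ew g 1 true ++ gen g ++ inv_word (Ew g 1 true)
  else if g == m then Ew m 1 true ++ gen m
  else if g < m + k then
    Ew (g - m).-1 1 true ++ [:: (g.-1, true)] ++ gen g ++ inv_word (Ew (g - m) 1 true)
  else gen g.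

Lemma psi0A m k g : g < m -> psi0 m k g = Ew g 1 true ++ gen g ++ inv_word (Ew g 1 true).
Proof. by rewrite /psi0 => ->. Qed.

Lemma psi0B1 m k : psi0 m k m = Ew m 1 true ++ gen m.
Proof. by rewrite /psi0 ltnn eqxx. Qed.

Lemma psi0Bs m k j : j.+1 < k ->
  psi0 m k (m + j.+1) = Ew j 1 true ++ [:: (m + j, true)] ++ gen (m + j.+1) ++ inv_word (Ew j.+1 1 true).
Proof.
move=> Hj; rewrite /psi0 ltnNge leq_addr /=.
have -> : (m + j.+1 == m) = false by apply/negbTE/eqP; lia.
by rewrite ltn_add2l Hj addKn addnS.
Qed.

Lemma psi0C m k g : 0 < k -> m + k <= g -> psi0 m k g = gen g.
Proof.
move=> Hk H; rewrite /psi0.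
have -> : (g < m) = false by apply/negbTE; rewrite -leqNgt; lia.
have -> : (g == m) = false by apply/negbTE/eqP; lia.
have -> : (g < m + k) = false by apply/negbTE; rewrite -leqNgt.
by [].
Qed.

Lemma phiC m k g : m + k <= g -> phi m k g = gen g.
Proof.
move=> H; rewrite /phi.
have -> : (g < m) = false by apply/negbTE; rewrite -leqNgt; lia.
have -> : (g < m + k) = false by apply/negbTE; rewrite -leqNgt.
by [].
Qed.

Lemma comp_gen (f h : endo) g : sub f (h g) =w gen g ->
  apply_endo f (apply_endo h (gen g)) = gen g.
Proof.
rewrite !applyE.
have := sub_reduce f (sub h (gen g)); rewrite /eqw => ->.
by rewrite sub_gen cats0 => ->.
Qed.

Lemma sub_phi_E1 m k j : j <= m -> sub (phi m k) (Ew j 1 true) =w inv_word (Aseq j).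
Proof. by move=> Hj; rewrite (@ephi_t m k j 0 Hj) Ew0. Qed.

Lemma sub_gent f g : sub f [:: (g, true)] = inv_word (f g) ++ [::].
Proof. by []. Qed.

Lemma phi_psi0 m k g : 0 < k -> k <= m -> sub (phi m k) (psi0 m k g) =w gen g.
Proof.
move=> Hk Hkm.
case: (ltnP g m) => Hgm.
  rewrite psi0A // (sub_cat _ (Ew g 1 true)) (sub_cat _ (gen g)) sub_inv sub_gen phiA //.
  rewrite (@sub_phi_E1 m k g (ltnW Hgm)) inv_wordK cats0 -!catA cancelL'.
  by rewrite cancelL cats0.
case: (ltnP g (m + k)) => Hgk; last first.
  by rewrite psi0C // sub_gen phiC.
move: Hgm; rewrite leq_eqVlt => /orP[/eqP <- | Hgm].
  rewrite psi0B1 sub_cat sub_gen (phiB1 m Hk) (@sub_phi_E1 m k m (leqnn m)).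
  by rewrite cats0 -?catA cancelL'.
have [j Hgj] : exists j, g = m + j.+1 by exists (g - m).-1; lia.
subst g.
have Hj : j.+1 < k by lia.
rewrite (psi0Bs m Hj).
rewrite (sub_cat _ (Ew j 1 true)) (sub_cat _ [:: (m + j, true)]) (sub_cat _ (gen _)).
have Hj1 : j.+1 <= m by lia.
rewrite sub_gent sub_inv sub_gen (@sub_phi_E1 m k j (ltnW Hj1)) (@sub_phi_E1 m k j.+1 Hj1).
rewrite (@phiBs m k j Hj) !cats0 inv_wordK -!catA cancelL' cancelL' cancelL.
by rewrite cats0.
Qed.

Lemma psi0_Aseq m k t : t <= m -> sub (psi0 m k) (Aseq t) =w inv_word (Ew t 1 true).
Proof.
elim: t => [|t IH] Ht; first by [].
rewrite Aseq_S sub_cat (IH (ltnW Ht)) sub_gen (psi0A k Ht).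
rewrite cats0 -?catA cancelL' EwS inv_word_cat.
by [].
Qed.

Lemma cancel_gen2 g c : gen g ++ [:: (g, true)] ++ c =w c.
Proof. exact: cancel_gen. Qed.

Lemma psi0_Bseq m k s : 0 < k -> s < k ->
  sub (psi0 m k) (Defs.Bseq m s.+1) =w Ew m 1 true ++ gen (m + s) ++ inv_word (Ew s 1 true).
Proof.
move=> Hk; elim: s => [|s IH] Hs.
  rewrite Bseq_S addn0 sub_cat sub_gen psi0B1.
  by rewrite cats0.
rewrite Bseq_S sub_cat (IH (ltnW Hs)) sub_gen (psi0Bs m Hs).
by rewrite cats0 -?catA cancelL' cancel_gen2.
Qed.

Lemma psi0_phi m k g : 0 < k -> k <= m -> sub (psi0 m k) (phi m k g) =w gen g.
Proof.
move=> Hk Hkm.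
case: (ltnP g m) => Hgm.
  rewrite phiA // (sub_cat _ (Aseq g)) (sub_cat _ (gen g)) sub_inv sub_gen (psi0A k Hgm).
  rewrite (@psi0_Aseq m k g (ltnW Hgm)) cats0 inv_wordK -?catA cancelL' cancelL.
  by rewrite cats0.
case: (ltnP g (m + k)) => Hgk; last first.
  by rewrite phiC // sub_gen psi0C.
have [j [Hj ->]] : exists j, j < k /\ g = m + j by exists (g - m); split; lia.
have Hjm : j <= m by lia.
rewrite (phiB m Hj) (sub_cat _ (Aseq m)) sub_cat sub_inv (@psi0_Aseq m k m (leqnn m)).
rewrite (@psi0_Bseq m k j Hk Hj) (@psi0_Aseq m k j Hjm) inv_wordK -?catA cancelL' cancelL.
by rewrite cats0.
Qed.

Lemma psi0_inverse m k : 0 < k -> k <= m -> is_inverse_endo (phi m k) (psi0 m k).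
Proof.
move=> Hk Hkm g; split; apply: comp_gen.
  exact: psi0_phi.
exact: phi_psi0.
Qed.

Theorem proposition8p1 (m k : nat) (hk : 1 <= k) (hkm : k <= m) :
  growth_le_poly (gr (phi m k) (m + k)) k /\
  (exists psi : endo, is_inverse_endo (phi m k) psi) /\
  (forall psi : endo, is_inverse_endo (phi m k) psi ->
     growth_le_poly (gr psi (m + k)) k).
Proof.
split; first exact: growth_phi.
split; first by exists (psi0 m k); apply: psi0_inverse.
move=> psi Hpsi; apply: growth_psi => // g.
exact: (Hpsi g).1.
Qed.
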